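(* Let $\lambda>0$, $\xi>0$, $v_2<v_1$ with either $v_2<0<v_1$ or $0<v_2<v_1$, $q\in[0,1]$, and let $\tilde p(x,t)$ be the (generalized) density of the position $\tilde X(t)$ of the extended telegraph process driven by GCPs with parameter $\lambda$ with Poissonian resets to the origin at rate $\xi$, with $\tilde X(0)=0$ and random initial velocity $V_0$, $P\{V_0=v_1\}=q=1-P\{V_0=v_2\}$. Then for $x\in\mathbb R$, $$ \lim_{t\to+\infty}\tilde p(x,t)=q\overline H_1(x)+(1-q)\overline H_2(x)+\frac{\xi e^{\xi/\lambda}}{v_1-v_2}\Gamma\Big[0,\Big(M_x+\frac1\lambda\Big)\xi\Big]\quad\text{if } v_2<0<v_1, $$ $$ \lim_{t\to+\infty}\tilde p(x,t)=q\overline H_1(x)+(1-q)\overline H_2(x)+\mathbb 1_{\{x>0\}}\frac{\xi e^{\xi/\lambda}}{v_1-v_2}\Gamma\Big[0,\Big(\frac x{v_1}+\frac1\lambda\Big)\xi,\Big(\frac x{v_2}+\frac1\lambda\Big)\xi\Big]\quad\text{if } 0<v_2<v_1, $$ where $\overline H_j(x)=\mathrm{sgn}(v_j)\mathbb 1_{\{x/v_j>0\}}\frac{\xi e^{-\xi x/v_j}}{v_j+\lambda x}$, $j=1,2$.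
   Context: GCP with intensity $\lambda>0$: a Poisson process whose rate is random, exponentially distributed with mean $\lambda$; increments satisfy $P\{\tilde N_\lambda(t+s)-\tilde N_\lambda(t)=k\}=\frac{1}{1+\lambda s}(\frac{\lambda s}{1+\lambda s})^k$. The process: a particle starts at the origin with initial velocity $V(0)$ ($v_1,v_2\neq0$, $v_2<v_1$), moves with velocity alternating between $v_1$ and $v_2$, the periods at velocity $v_1$ and at $v_2$ being governed by two independent GCPs of intensity $\lambda$; additionally it is instantaneously reset to the origin at the epochs of an independent Poisson process of rate $\xi$, restarting afresh with its initial velocity. Conditional on $V(0)=v_j$, the density is $\tilde p(x,t|v_j)=e^{-\xi t}p(x,t|v_j)+\xi\int_0^te^{-\xi s}p(x,s|v_j)ds$, where $p(x,t|v_j)=\frac{\delta(x-v_jt)}{1+\lambda t}+\mathbb 1_{\{v_2t<x<v_1t\}}\frac{\lambda}{(v_1-v_2)(1+\lambda t)}$ ($\delta$ Dirac delta); $\tilde p(x,t)=q\tilde p(x,t|v_1)+(1-q)\tilde p(x,t|v_2)$. Notation: $M_x=\max\{x/v_1,x/v_2\}$; $\Gamma(a,z)=\int_z^\infty s^{a-1}e^{-s}ds$; $\Gamma(a,z_0,z_1)=\int_{z_0}^{z_1}s^{a-1}e^{-s}ds$. *)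

(* Defs.v *)
From HB Require Import structures.
From mathcomp Require Import all_boot all_order all_algebra.
From mathcomp Require Import all_classical all_reals all_analysis.
Set Implicit Arguments. Unset Strict Implicit. Unset Printing Implicit Defensive.
Import Order.TTheory GRing.Theory Num.Theory.
Import numFieldNormedType.Exports.
Local Open Scope classical_set_scope.
Local Open Scope ring_scope.
Local Open Scope ereal_scope.

Section Defs.
Variable R : realType.
Local Notation mu := (@lebesgue_measure R).

Definition dirac_pt (y : R) : \bar R := if y == 0%R then +oo else 0.

(* Sifting property: int_0^t g(s) delta(x - vj s) ds
   = g(x/vj)/|vj| * 1_{0 < x/vj < t}. *)
Definition delta_sift (g : R -> R) (vj x t : R) : R :=
  if ((0 < x / vj) && (x / vj < t))%R then (g (x / vj) / `|vj|)%R else 0%R.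

Definition p_ac (lam v1 v2 x t : R) : R :=
  if ((v2 * t < x) && (x < v1 * t))%R
  then (lam / ((v1 - v2) * (1 + lam * t)))%R else 0%R.

Definition p_dens (lam v1 v2 vj x t : R) : \bar R :=
  dirac_pt (x - vj * t)%R * (1 / (1 + lam * t))%:E + (p_ac lam v1 v2 x t)%:E.

Definition ptilde_j (lam xi v1 v2 vj x t : R) : \bar R :=
  (expR (- xi * t))%:E * p_dens lam v1 v2 vj x t
  + xi%:E * ((delta_sift (fun s => expR (- xi * s) / (1 + lam * s))%R vj x t)%:E
             + \int[mu]_(s in `[0%R, t]) (expR (- xi * s) * p_ac lam v1 v2 x s)%:E).

Definition ptilde (lam xi v1 v2 q x t : R) : \bar R :=
  q%:E * ptilde_j lam xi v1 v2 v1 x t + (1 - q)%:E * ptilde_j lam xi v1 v2 v2 x t.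

Definition Gamma_up (a z : R) : \bar R :=
  \int[mu]_(s in `[z, +oo[) (s `^ (a - 1) * expR (- s))%:E.
Definition Gamma_seg (a z0 z1 : R) : \bar R :=
  \int[mu]_(s in `[z0, z1]) (s `^ (a - 1) * expR (- s))%:E.

Definition Hbar (lam xi vj x : R) : R :=
  if (0 < x / vj)%R
  then (Num.sg vj * (xi * expR (- xi * x / vj)) / (vj + lam * x))%R else 0%R.

Definition Mx (v1 v2 x : R) : R := (Num.max (x / v1) (x / v2))%R.

End Defs.

(* Main.v *)
Require Import Defs.
From HB Require Import structures.
From mathcomp Require Import all_boot all_order all_algebra.
From mathcomp Require Import all_classical all_reals all_analysis.
From mathcomp Require Import measurable_realfun exponential_distribution.
From mathcomp Require Import ring lra.
Import Order.TTheory GRing.Theory Num.Theory.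
Import numFieldNormedType.Exports.
Local Open Scope classical_set_scope.
Local Open Scope ring_scope.

Section helpers.
Variable R : realType.
Local Notation mu := (@lebesgue_measure R).
Variables (lam xi v1 v2 x : R).
Hypotheses (lam0 : 0 < lam) (xi0 : 0 < xi) (v12 : v2 < v1).

Definition hh (s : R) : R := expR (- xi * s) * (lam / ((v1 - v2) * (1 + lam * s))).
Definition kk (s : R) : R := expR (- xi * s) * p_ac lam v1 v2 x s.

Lemma p_ac_ge0 s : 0 <= s -> 0 <= p_ac lam v1 v2 x s.
Proof.
move=> s0; rewrite /p_ac; case: ifP => // _.
apply: divr_ge0; first exact: ltW.
apply: mulr_ge0; first by rewrite subr_ge0 ltW.
by apply: addr_ge0 => //; apply: mulr_ge0 => //; exact: ltW.
Qed.

Lemma p_ac_le s : 0 <= s -> p_ac lam v1 v2 x s <= lam / (v1 - v2).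
Proof.
move=> s0; rewrite /p_ac; case: ifP => _; last first.
  by apply: divr_ge0; [exact: ltW | rewrite subr_ge0 ltW].
rewrite invfM mulrA; apply: ler_piMr.
  by apply: divr_ge0; [exact: ltW | rewrite subr_ge0 ltW].
rewrite invf_le1 ?lerDl ?mulr_ge0 ?(ltW lam0)//.
by rewrite ltr_pwDl // mulr_ge0 // ltW.
Qed.

Lemma kk_ge0 s : 0 <= s -> 0 <= kk s.
Proof. by move=> s0; rewrite /kk mulr_ge0 ?expR_ge0 ?p_ac_ge0. Qed.

Lemma cont_frac s : 0 <= s ->
  {for s, continuous (fun s => lam / ((v1 - v2) * (1 + lam * s)))}.
Proof.
move=> s0.
have H : (v1 - v2) * (1 + lam * s) != 0.
  by rewrite mulf_neq0 // ?subr_eq0 ?gt_eqF // ltr_pwDl // mulr_ge0 // ltW.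
apply: continuousM; first exact: cst_continuous.
apply: continuousV => //.
apply: continuousM; first exact: cst_continuous.
apply: continuousD; first exact: cst_continuous.
apply: continuousM; first exact: cst_continuous.
exact: cvg_id.
Qed.

Lemma cont_hh s : 0 <= s -> {for s, continuous hh}.
Proof.
move=> s0; apply: continuousM; last exact: cont_frac.
apply: continuous_comp; last exact: continuous_expR.
apply: continuousM; first exact: cst_continuous.
exact: cvg_id.
Qed.

Lemma meas_p_ac : measurable_fun (`[0, +oo[ : set R) (p_ac lam v1 v2 x).
Proof.
rewrite /p_ac; apply: measurable_fun_if => //.
  apply: measurable_and; apply: measurable_fun_ltr => //;
  by apply: measurable_funTS; apply: measurable_funM.
apply: (measurable_funS (measurable_itv `[0%R, +oo[)); first exact: subIsetl.
apply: subspace_continuous_measurable_fun => //.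
apply: continuous_in_subspaceT => s; rewrite inE /= in_itv /= andbT.
exact: cont_frac.
Qed.

Lemma meas_kk : measurable_fun (`[0, +oo[ : set R) (fun s => (kk s)%:E).
Proof.
apply/measurable_EFinP; apply: measurable_funM; last exact: meas_p_ac.
apply: measurable_funTS; apply: continuous_measurable_fun.
move=> s; apply: continuous_comp; last exact: continuous_expR.
apply: continuousM; first exact: cst_continuous.
exact: cvg_id.
Qed.


Local Open Scope ereal_scope.
Definition II (t : R) := \int[mu]_(s in `[0%R, t]) (kk s)%:E.
Definition LL := \int[mu]_(s in `[0%R, +oo[) (kk s)%:E.

Lemma meas_kk_sub (A : set R) : measurable A -> A `<=` `[0%R, +oo[ ->
  measurable_fun A (fun s => (kk s)%:E).
Proof.
move=> mA AS; apply: (measurable_funS (measurable_itv `[0%R, +oo[)) => //.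
exact: meas_kk.
Qed.

Lemma sub0t (t : R) : `[0%R, t] `<=` `[0%R, +oo[.
Proof. by move=> s /=; rewrite !in_itv /= andbT => /andP[]. Qed.

Lemma II_ge0 t : 0 <= II t.
Proof.
apply: integral_ge0 => s /=; rewrite in_itv /= => /andP[s0 _].
by rewrite lee_fin kk_ge0.
Qed.

Lemma II_le t : II t <= LL.
Proof.
apply: ge0_subset_integral => //; first exact: meas_kk.
  by move=> s /=; rewrite in_itv /= andbT => s0; rewrite lee_fin kk_ge0.
exact: sub0t.
Qed.

Lemma II_nd : {homo II : a b / (a <= b)%R >-> a <= b}.
Proof.
move=> a b ab; apply: ge0_subset_integral => //.
- by apply: meas_kk_sub => //; exact: sub0t.
- by move=> s /=; rewrite in_itv /= => /andP[s0 _]; rewrite lee_fin kk_ge0.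
- move=> s /=; rewrite !in_itv /= => /andP[-> sa] /=.
  exact: le_trans ab.
Qed.

Lemma II_cvg : II t @[t --> +oo%R] --> LL.
Proof.
have h1 := nondecreasing_cvge II_nd.
suff E : ereal_sup (range II) = LL by rewrite -E.
have h2 : II (n%:R) @[n --> \oo] --> ereal_sup (range II).
  exact: (cvg_comp _ _ cvgr_idn h1).
have h3 : II (n%:R) @[n --> \oo] --> LL.
  have -> : LL = \int[mu]_(s in \bigcup_n `[0%R, n%:R]%classic) (kk s)%:E.
    rewrite /LL (itv_bndy_bigcup_BRight true 0%R).
    by congr (integral _ _ _); apply: eq_bigcupr => n _; rewrite add0r.
  apply: ge0_nondecreasing_set_cvg_integral => //.
  - move=> n m nm; apply/subsetPset => s /=; rewrite !in_itv /= => /andP[-> sn] /=.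
    by rewrite (le_trans sn) // ler_nat.
  - by move=> n; apply: meas_kk_sub => //; exact: sub0t.
  - by move=> n s /=; rewrite in_itv /= => /andP[s0 _]; rewrite lee_fin kk_ge0.
by move/cvg_lim : h2 => <- //; move/cvg_lim : h3 => ->.
Qed.


Lemma LL_ge0 : 0 <= LL.
Proof.
apply: integral_ge0 => s /=; rewrite in_itv /= andbT => s0.
by rewrite lee_fin kk_ge0.
Qed.

Lemma LL_fin : LL \is a fin_num.
Proof.
have C0 : (0 <= lam / ((v1 - v2) * xi))%R.
  by rewrite divr_ge0 ?mulr_ge0 ?ltW // subr_gt0.
rewrite ge0_fin_numE; last exact: LL_ge0.
apply: (@le_lt_trans _ _ (\int[mu]_(s in `[0%R, +oo[)
   ((lam / ((v1 - v2) * xi))%:E * (exponential_pdf xi s)%:E))).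
  apply: ge0_le_integral => //.
  - by move=> s /=; rewrite in_itv /= andbT => s0; rewrite lee_fin kk_ge0.
  - exact: meas_kk.
  - apply/measurable_EFinP => /=; apply: measurable_funM => //.
    apply: measurable_funTS; exact: measurable_exponential_pdf.
  - move=> s /=; rewrite in_itv /= andbT => s0.
    rewrite -EFinM lee_fin exponential_pdfE //= /kk.
    apply: (@le_trans _ _ (expR (- xi * s) * (lam / (v1 - v2)))%R).
      by rewrite ler_pM2l ?expR_gt0 // p_ac_le.
    rewrite le_eqVlt; apply/orP; left; apply/eqP.
    have v0 : (v1 - v2 != 0)%R by rewrite subr_eq0 gt_eqF.
    by field; rewrite v0 gt_eqF.
apply: (@le_lt_trans _ _ (\int[mu]_(s in [set: R])
   ((lam / ((v1 - v2) * xi))%:E * (exponential_pdf xi s)%:E))).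
  apply: ge0_subset_integral => //.
  - apply/measurable_EFinP => /=; apply: measurable_funM => //.
    exact: measurable_exponential_pdf.
  - by move=> s _; rewrite -EFinM lee_fin mulr_ge0 // exponential_pdf_ge0 // ltW.
rewrite ge0_integralZl_EFin //.
- by rewrite integral_exponential_pdf // mule1 ltry.
- by move=> s _; rewrite lee_fin exponential_pdf_ge0 // ltW.
- apply/measurable_EFinP; exact: measurable_exponential_pdf.
Qed.

Local Close Scope ereal_scope.
Definition FF (s : R) : R := (s + 1 / lam) * xi.
Definition GG (u : R) : R := u^-1 * expR (- u).

Lemma dsc (s c : R) : derivable (fun s : R => s + c) s 1.
Proof.
have -> : (fun s : R => s + c) = id + cst c by apply/funext.
apply: derivableD; [exact: derivable_id | exact: derivable_cst].
Qed.

Lemma FF_derivable (s : R) : derivable FF s 1.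
Proof.
rewrite /FF.
have -> : (fun s : R => (s + 1/lam) * xi) = (fun s : R => s + 1/lam) * cst xi by apply/funext.
apply: derivableM; [exact: dsc | exact: derivable_cst].
Qed.

Lemma FF_der (s : R) : FF^`()%classic s = xi.
Proof.
rewrite /FF derive1Mr; last exact: dsc.
have -> : (fun s : R => s + 1/lam) = id + cst (1/lam) by apply/funext.
rewrite derive1E deriveD; [|exact: derivable_id | exact: derivable_cst].
by rewrite derive_id derive_cst addr0 mul1r.
Qed.

Lemma FF'E : FF^`()%classic = cst xi.
Proof. by apply/funext => s; rewrite FF_der. Qed.

Lemma cont_FF s : {for s, continuous FF}.
Proof.
apply: continuousM; last exact: cst_continuous.
apply: continuousD; [exact: cvg_id | exact: cst_continuous].
Qed.

Lemma cont_GG u : u != 0 -> {for u, continuous GG}.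
Proof.
move=> u0; apply: continuousM; first by apply: continuousV => //; exact: cvg_id.
apply: continuous_comp; last exact: continuous_expR.
apply: cvgN; exact: cvg_id.
Qed.

Lemma GG_ge0 u : 0 < u -> 0 <= GG u.
Proof. by move=> u0; rewrite /GG mulr_ge0 ?expR_ge0 // invr_ge0 ltW. Qed.

Lemma hh_ge0 s : 0 <= s -> 0 <= hh s.
Proof.
move=> s0; rewrite /hh; apply: mulr_ge0; first exact: expR_ge0.
apply: divr_ge0; first exact: ltW.
apply: mulr_ge0; first by rewrite subr_ge0 ltW.
by rewrite addr_ge0 // mulr_ge0 // ltW.
Qed.

Lemma GF_eq s : 0 <= s ->
  ((GG \o FF) * FF^`()%classic) s = ((v1 - v2) * expR (- (xi / lam))) * hh s.
Proof.
move=> s0.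
have -> : ((GG \o FF) * FF^`()%classic) s = GG (FF s) * FF^`()%classic s by [].
rewrite FF_der /GG /FF /hh.
have -> : - ((s + 1 / lam) * xi) = (- xi * s) + (- (xi / lam)) by ring.
rewrite expRD.
have l0 : lam != 0 by rewrite gt_eqF.
have x0 : xi != 0 by rewrite gt_eqF.
have v0 : v1 - v2 != 0 by rewrite subr_eq0 gt_eqF.
have s1 : 1 + lam * s != 0 by rewrite gt_eqF // ltr_pwDl // mulr_ge0 // ltW.
have s2 : s + 1 / lam != 0 by rewrite gt_eqF // ltr_pwDr ?divr_gt0.
have s3 : s * lam + 1 != 0 by rewrite addrC mulrC.
have s4 : lam * s + 1 != 0 by rewrite addrC.
field.
by rewrite s1 v0 l0 x0.
Qed.

Lemma meas_hh (D : set R) : measurable D -> D `<=` `[0, +oo[ ->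
  measurable_fun D (fun s => (hh s)%:E).
Proof.
move=> mD DS; apply/measurable_EFinP.
apply: subspace_continuous_measurable_fun => //.
apply: continuous_in_subspaceT => s; rewrite inE => /DS /=.
rewrite in_itv /= andbT; exact: cont_hh.
Qed.


Lemma FF_cvgy : FF s @[s --> +oo] --> +oo.
Proof.
apply/cvgryPge => M; near=> y.
rewrite /FF -ler_pdivrMr //.
have hy : M / xi <= y by near: y; apply: nbhs_pinfty_ge; rewrite num_real.
apply: (le_trans hy); rewrite lerDl divr_ge0 // ltW.
Unshelve. all: by end_near.
Qed.

Lemma const_eq : xi * expR (xi / lam) / (v1 - v2) * ((v1 - v2) * expR (- (xi / lam))) = xi.
Proof.
have v0 : v1 - v2 != 0 by rewrite subr_eq0 gt_eqF.
have e0 : expR (xi / lam) != 0 by rewrite gt_eqF // expR_gt0.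
rewrite expRN; field.
by rewrite v0 e0.
Qed.

Lemma Gamma_case1 (A : R) : 0 <= A ->
  (forall s, 0 <= s -> ((v2 * s < x) && (x < v1 * s)) = (A < s)) ->
  ((xi * expR (xi / lam) / (v1 - v2))%:E * Gamma_up 0 ((A + 1/lam) * xi)
   = xi%:E * LL)%E.
Proof.
move=> A0 HA.
have il0 : 0 < 1 / lam by rewrite divr_gt0.
have z0 : 0 < (A + 1/lam) * xi by rewrite mulr_gt0 // ltr_wpDl.
have E1 : (Gamma_up 0 ((A + 1/lam) * xi)%R =
    \int[mu]_(u in `[((A + 1/lam) * xi)%R, +oo[) (GG u)%:E)%E.
  apply: eq_integral => u; rewrite inE /= in_itv /= andbT => zu.
  by rewrite sub0r powR_inv1 // (le_trans (ltW z0) zu).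
have E2 : (\int[mu]_(u in `[((A + 1/lam) * xi)%R, +oo[) (GG u)%:E =
    \int[mu]_(s in `[A, +oo[) (((GG \o FF) * FF^`()%classic) s)%:E)%E.
  apply: (@increasing_ge0_integration_by_substitutiony _ FF GG A).
  - by move=> a b _ _ ab; rewrite /FF ltr_pM2r // ltrD2r.
  - by rewrite FF'E => s _; exact: cst_continuous.
  - by rewrite FF'E; exact: is_cvg_cst.
  - by rewrite FF'E; exact: is_cvg_cst.
  - split; first by move=> s _; exact: FF_derivable.
    apply: cvg_at_right_filter; exact: cont_FF.
  - exact: FF_cvgy.
  - apply: continuous_in_subspaceT => u; rewrite inE /= in_itv /= andbT => zu.
    by apply: cont_GG; rewrite gt_eqF // (lt_le_trans z0 zu).
  - move=> u; rewrite in_itv /= andbT => zu.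
    by apply: GG_ge0; rewrite (lt_trans z0 zu).
have E3 : (\int[mu]_(s in `[A, +oo[) (((GG \o FF) * FF^`()%classic) s)%:E =
    \int[mu]_(s in `[A, +oo[) (((v1 - v2) * expR (- (xi / lam)))%R%:E * (hh s)%:E))%E.
  apply: eq_integral => s; rewrite inE /= in_itv /= andbT => As.
  by rewrite GF_eq ?EFinM // (le_trans A0 As).
have sA : `[A, +oo[ `<=` `[0, +oo[.
  by move=> s /=; rewrite !in_itv /= !andbT; exact: le_trans.
have sA' : `]A, +oo[ `<=` `[0, +oo[.
  by move=> s /=; rewrite !in_itv /= !andbT => /ltW; exact: le_trans.
have E4 : (LL = \int[mu]_(s in `[A, +oo[) (hh s)%:E)%E.
  rewrite -integral_itv_obnd_cbnd; last exact: meas_hh.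
  rewrite /LL integral_mkcond [RHS]integral_mkcond.
  apply: eq_integral => s _; rewrite !patchE.
  case: (leP 0 s) => s0.
    rewrite mem_set; last by rewrite /= in_itv /= s0.
    case: (ltP A s) => As.
      rewrite mem_set; last by rewrite /= in_itv /= As.
      by rewrite /kk /p_ac HA // As.
    rewrite memNset; last by rewrite /= in_itv /= ltNge As.
    by rewrite /kk /p_ac HA // ltNge As /= mulr0.
  rewrite memNset; last by rewrite /= in_itv /= leNgt s0.
  rewrite memNset // /= in_itv /= andbT; apply/negP; rewrite -leNgt.
  exact: (le_trans (ltW s0) A0).
rewrite E1 E2 E3 ge0_integralZl_EFin //; last 3 first.
- by move=> s /=; rewrite in_itv /= andbT => As; rewrite lee_fin hh_ge0 // (le_trans A0 As).
- exact: meas_hh.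
- by rewrite mulr_ge0 ?expR_ge0 // subr_ge0 ltW.
by rewrite E4 muleA -EFinM const_eq.
Qed.


Lemma LL0 : (forall s, 0 <= s -> ((v2 * s < x) && (x < v1 * s)) = false) ->
  LL = 0%E.
Proof.
move=> H; apply: integral0_eq => s /=; rewrite in_itv /= andbT => s0.
by rewrite /kk /p_ac H // mulr0.
Qed.

Lemma Gamma_case2 (A B : R) : 0 <= A -> A <= B ->
  (forall s, 0 <= s -> ((v2 * s < x) && (x < v1 * s)) = ((A < s) && (s < B))) ->
  ((xi * expR (xi / lam) / (v1 - v2))%:E *
     Gamma_seg 0 ((A + 1/lam) * xi) ((B + 1/lam) * xi)
   = xi%:E * LL)%E.
Proof.
move=> A0 AB HA.
have il0 : 0 < 1 / lam by rewrite divr_gt0.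
have z0 : 0 < (A + 1/lam) * xi by rewrite mulr_gt0 // ltr_wpDl.
have E1 : (Gamma_seg 0 ((A + 1/lam) * xi)%R ((B + 1/lam) * xi)%R =
    \int[mu]_(u in `[((A + 1/lam) * xi)%R, ((B + 1/lam) * xi)%R]) (GG u)%:E)%E.
  apply: eq_integral => u; rewrite inE /= in_itv /= => /andP[zu _].
  by rewrite sub0r powR_inv1 // (le_trans (ltW z0) zu).
have E2 : (\int[mu]_(u in `[((A + 1/lam) * xi)%R, ((B + 1/lam) * xi)%R]) (GG u)%:E =
    \int[mu]_(s in `[A, B]) (((GG \o FF) * FF^`()%classic) s)%:E)%E.
  apply: (@integration_by_substitution_increasing _ FF GG A B AB).
  - by move=> a b _ _ ab; rewrite /FF ltr_pM2r // ltrD2r.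
  - by rewrite FF'E => s _; exact: cst_continuous.
  - by rewrite FF'E; exact: is_cvg_cst.
  - by rewrite FF'E; exact: is_cvg_cst.
  - split; first by move=> s _; exact: FF_derivable.
    + apply: cvg_at_right_filter; exact: cont_FF.
    + apply: cvg_at_left_filter; exact: cont_FF.
  - apply: continuous_in_subspaceT => u; rewrite inE /= in_itv /= => /andP[zu _].
    by apply: cont_GG; rewrite gt_eqF // (lt_le_trans z0 zu).
have E3 : (\int[mu]_(s in `[A, B]) (((GG \o FF) * FF^`()%classic) s)%:E =
    \int[mu]_(s in `[A, B]) (((v1 - v2) * expR (- (xi / lam)))%R%:E * (hh s)%:E))%E.
  apply: eq_integral => s; rewrite inE /= in_itv /= => /andP[As _].
  by rewrite GF_eq ?EFinM // (le_trans A0 As).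
have sA : `[A, B] `<=` `[0, +oo[.
  by move=> s /=; rewrite !in_itv /= !andbT => /andP[+ _]; exact: le_trans.
have sA' : `]A, B] `<=` `[0, +oo[.
  by move=> s /=; rewrite !in_itv /= !andbT => /andP[/ltW + _]; exact: le_trans.
have sA'' : `]A, B[ `<=` `[0, +oo[.
  by move=> s /=; rewrite !in_itv /= !andbT => /andP[/ltW + _]; exact: le_trans.
have E4 : (LL = \int[mu]_(s in `[A, B]) (hh s)%:E)%E.
  rewrite -integral_itv_obnd_cbnd; last exact: meas_hh.
  rewrite -integral_itv_bndo_bndc; last exact: meas_hh.
  rewrite /LL integral_mkcond [RHS]integral_mkcond.
  apply: eq_integral => s _; rewrite !patchE.
  case: (leP 0 s) => s0.
    rewrite mem_set; last by rewrite /= in_itv /= s0.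
    case: (boolP ((A < s) && (s < B))) => As.
      rewrite mem_set; last by rewrite /= in_itv /= As.
      by rewrite /kk /p_ac HA // As.
    rewrite memNset; last by rewrite /= in_itv /=; exact/negP.
    by rewrite /kk /p_ac HA // (negbTE As) /= mulr0.
  rewrite memNset; last by rewrite /= in_itv /= leNgt s0.
  rewrite memNset // /= in_itv /= => /andP[As _].
  by move: (lt_trans (le_lt_trans A0 As) s0); rewrite ltxx.
rewrite E1 E2 E3 ge0_integralZl_EFin //; last 3 first.
- by move=> s /=; rewrite in_itv /= => /andP[As _]; rewrite lee_fin hh_ge0 // (le_trans A0 As).
- exact: meas_hh.
- by rewrite mulr_ge0 ?expR_ge0 // subr_ge0 ltW.
by rewrite E4 muleA -EFinM const_eq.
Qed.


Definition ee (t : R) := expR (- xi * t) * p_ac lam v1 v2 x t.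
Definition dd (vj : R) := if 0 < x / vj
  then expR (- xi * (x / vj)) / (1 + lam * (x / vj)) / `|vj| else 0.

Lemma expNM_cvg : expR (- xi * t) @[t --> +oo] --> 0.
Proof.
rewrite (_ : (fun t => expR (- xi * t)) = (fun z => expR (- z)) \o (fun z => xi * z)); last first.
  by apply/funext => t /=; rewrite mulNr.
apply: (@cvg_comp _ _ _ _ _ _ (pinfty_nbhs R)); last exact: cvgr_expR.
by apply: gt0_cvgMry => //; exact: cvg_id.
Qed.

Lemma ee_cvg : ee t @[t --> +oo] --> 0.
Proof.
apply: (@squeeze_cvgr _ _ _ _ (cst 0) (fun t => lam / (v1 - v2) * expR (- xi * t))).
- near=> t; have t0 : 0 <= t by near: t; apply: nbhs_pinfty_ge; rewrite num_real.
  rewrite /ee /= mulr_ge0 ?expR_ge0 ?p_ac_ge0 //= [X in _ <= X]mulrC ler_pM2l ?expR_gt0 //.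
  exact: p_ac_le.
- exact: cvg_cst.
- rewrite -(mulr0 (lam / (v1 - v2))); apply: cvgM; first exact: cvg_cst.
  exact: expNM_cvg.
Unshelve. all: by end_near.
Qed.

Lemma II_fin t : II t \is a fin_num.
Proof.
rewrite ge0_fin_numE; last exact: II_ge0.
apply: (le_lt_trans (II_le t)); rewrite -ge0_fin_numE ?LL_fin //; exact: LL_ge0.
Qed.

Lemma fineII_cvg : fine (II t) @[t --> +oo] --> fine LL.
Proof.
apply: fine_cvg; rewrite fineK; [exact: II_cvg | exact: LL_fin].
Qed.

Lemma dirac0 (y : R) : y != 0 -> dirac_pt y = 0%E.
Proof. by move=> y0; rewrite /dirac_pt (negbTE y0). Qed.

Lemma ptj_eq (vj t : R) : vj != 0 -> x / vj < t ->
  ptilde_j lam xi v1 v2 vj x t = (ee t + xi * (dd vj + fine (II t)))%:E.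
Proof.
move=> vj0 ht.
have h : x - vj * t != 0.
  apply/eqP => h; move: ht; have -> : x = vj * t by apply/eqP; rewrite -subr_eq0 h.
  by rewrite [vj * t]mulrC mulfK // ltxx.
rewrite /ptilde_j /p_dens (@dirac0 _ h) mul0e add0e /delta_sift ht andbT.
have -> : (\int[mu]_(s in `[0%R, t]) (expR (- xi * s) * p_ac lam v1 v2 x s)%:E)%E
    = (fine (II t))%:E by rewrite fineK //; exact: II_fin.
by rewrite /ee /dd !(EFinD, EFinM).
Qed.

Lemma Hbar_eq (vj : R) : vj != 0 -> Hbar lam xi vj x = xi * dd vj.
Proof.
move=> vj0; rewrite /Hbar /dd; case: ifP => hx; last by rewrite mulr0.
have -> : - xi * x / vj = - xi * (x / vj) by rewrite mulrA.
have p1 : 0 < 1 + lam * (x / vj) by rewrite ltr_pwDl // mulr_ge0 // ltW.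
have e1 : vj + lam * x = vj * (1 + lam * (x / vj)) by field.
have p2 : vj + lam * x != 0 by rewrite e1 mulf_neq0 // gt_eqF.
have p3 : lam * x + vj != 0 by rewrite addrC.
have p4 : vj + x * lam != 0 by rewrite mulrC.
have p5 : x * lam + vj != 0 by rewrite addrC mulrC.
have p6 : 1 + lam * (x / vj) != 0 by rewrite gt_eqF.
case: (ltgtP vj 0) => hv; last by move: vj0; rewrite hv eqxx.
- rewrite ltr0_sg // ltr0_norm //.
  by field; rewrite vj0 p2.
- rewrite gtr0_sg // gtr0_norm //.
  by field; rewrite vj0 p2.
Qed.

Lemma main_gen (q : R) (Gm : \bar R) : v1 != 0 -> v2 != 0 ->
  Gm = (xi%:E * LL)%E ->
  ptilde lam xi v1 v2 q x t @[t --> +oo] -->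
    ((q * Hbar lam xi v1 x + (1 - q) * Hbar lam xi v2 x)%:E + Gm)%E.
Proof.
move=> v10 v20 ->.
set l := fine LL.
have LLE : LL = l%:E by rewrite fineK //; exact: LL_fin.
pose r t := q * (ee t + xi * (dd v1 + fine (II t))) +
            (1 - q) * (ee t + xi * (dd v2 + fine (II t))).
have Hr : r t @[t --> +oo] -->
    q * (0 + xi * (dd v1 + l)) + (1 - q) * (0 + xi * (dd v2 + l)).
  apply: cvgD; apply: cvgM; try exact: cvg_cst;
    (apply: cvgD; [exact: ee_cvg | apply: cvgM; first exact: cvg_cst];
     apply: cvgD; [exact: cvg_cst | exact: fineII_cvg]).
have -> : ((q * Hbar lam xi v1 x + (1 - q) * Hbar lam xi v2 x)%:E + xi%:E * LL)%E
    = (q * (0 + xi * (dd v1 + l)) + (1 - q) * (0 + xi * (dd v2 + l)))%:E.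
  rewrite LLE -EFinM -EFinD (@Hbar_eq _ v10) (@Hbar_eq _ v20); congr EFin; ring.
apply: (@cvg_trans _ ((fun t => (r t)%:E) @ +oo%R)).
  apply: near_eq_cvg; near=> t.
  have h1 : x / v1 < t by near: t; apply: nbhs_pinfty_gt; rewrite num_real.
  have h2 : x / v2 < t by near: t; apply: nbhs_pinfty_gt; rewrite num_real.
  by rewrite /ptilde (@ptj_eq _ _ v10 h1) (@ptj_eq _ _ v20 h2) /r -!EFinM -EFinD.
apply/fine_cvgP; split; first exact: nearW.
exact: Hr.
Unshelve. all: by end_near.
Qed.

End helpers.

Theorem corollary5 (R : realType) (lam xi v1 v2 q : R) :
  0 < lam -> 0 < xi -> v2 < v1 -> ((v2 < 0 < v1) \/ (0 < v2 < v1)) ->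
  0 <= q <= 1 ->
  forall x : R,
    ((v2 < 0 < v1) ->
      ptilde lam xi v1 v2 q x t @[t --> +oo] -->
        ((q * Hbar lam xi v1 x + (1 - q) * Hbar lam xi v2 x)%R%:E
         + (xi * expR (xi / lam) / (v1 - v2))%R%:E
           * Gamma_up 0%R ((Mx v1 v2 x + 1 / lam) * xi)%R)%E) /\
    ((0 < v2 < v1) ->
      ptilde lam xi v1 v2 q x t @[t --> +oo] -->
        ((q * Hbar lam xi v1 x + (1 - q) * Hbar lam xi v2 x)%R%:E
         + (if (0 < x)%R then
              (xi * expR (xi / lam) / (v1 - v2))%R%:E
              * Gamma_seg 0%R ((x / v1 + 1 / lam) * xi)%R ((x / v2 + 1 / lam) * xi)%R
            else 0))%E).
Proof.
move=> lam0 xi0 v12 _ _ x; split.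
- move=> /andP[v20 v10].
  apply: main_gen => //; [by rewrite gt_eqF | by rewrite lt_eqF |].
  apply: Gamma_case1 => //.
    rewrite /Mx le_max; case: (leP 0 x) => hx.
      by rewrite divr_ge0 // ltW.
    by apply/orP; right; rewrite mulr_le0 ?ltW // invr_lt0.
  move=> s _; rewrite /Mx gt_max ltr_pdivrMr // ltr_ndivrMr //.
  by rewrite andbC [s * v1]mulrC [s * v2]mulrC.
- move=> /andP[v20 _].
  have v10 : 0 < v1 by exact: lt_trans v12.
  apply: main_gen => //; [by rewrite gt_eqF | by rewrite gt_eqF |].
  case: (ltP 0 x) => hx.
    apply: Gamma_case2 => //.
    - by rewrite divr_ge0 // ltW.
    - rewrite ler_pM2l // lef_pV2 ?posrE // ltW //.
    - move=> s _; rewrite ltr_pdivrMr // ltr_pdivlMr //.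
      by rewrite andbC [s * v1]mulrC [s * v2]mulrC.
  rewrite LL0 ?mule0 //.
  move=> s s0; apply/negbTE; rewrite negb_and -leNgt.
  by rewrite (le_trans hx) // mulr_ge0 // ltW.
Qed.
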